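(* Let $\mathbf{A}$ be an algebra, let $\mathrm{Adm}(\mathbf{A})$ denote the set of all reflexive compatible binary relations on $\mathbf{A}$, and let $F,G:\mathrm{Adm}(\mathbf{A})\to\mathrm{Adm}(\mathbf{A})$ be arbitrary functions. Suppose that $\mathbf{A}$ has a ternary term $t$ which is Mal'cev modulo $F$ and $G$, i.e. for all $a,b\in A$ and all $R\in\mathrm{Adm}(\mathbf{A})$ with $aRb$ we have $(a,t(a,b,b))\in F(R)$ and $(t(a,a,b),b)\in G(R)$. Then for all $R,S,R_1,R_2,\dots\in\mathrm{Adm}(\mathbf{A})$ and all (arbitrary) binary relations $\theta,\theta_1,\theta_2\subseteq A^2$, the following hold: (i) If $a,b,c,d\in A$ satisfy $aRb$, $b\,\theta_1\,c$, $a\,\theta_2\,d$, $dSc$ and $b\,\theta\, d$, then $(a,c)\in F(R)\circ\overline{\theta_2\cup\theta\cup\theta_1}\circ G(S)$. (ii) $R\circ\theta\circ S\subseteq F(R)\circ\overline{(R\circ\theta)\cup(\theta\circ S)}\circ G(S)$. (iii) $R\circ S\subseteq F(R)\circ\overline{R\cup S}\circ G(S)\subseteq F(R)\circ S\circ R\circ G(S)$. (iv) For every $n\ge 0$, $R\circ_{n+2}S\subseteq F(R)\circ\big(\overline{F(R)\cup F(S)}\big)^n\circ\overline{R\cup S}\circ\big(\overline{G(R)\cup G(S)}\big)^n\circ G(S^\bullet)$, where $S^\bullet=S$ if $n$ is even and $S^\bullet=R$ if $n$ is odd. (v) $R+S\subseteq (F(R)+F(S))\circ\overline{R\cup S}\circ(G(R)+G(S))\subseteq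 (F(R)+F(S))\circ R\circ S\circ(G(R)+G(S))$. (vi) $R\circ R\subseteq F(R)\circ R\circ G(R)$. (vii) For every $n\ge 0$, $R^{n+1}\subseteq (F(R))^n\circ R\circ (G(R))^n$. (viii) $R^*\subseteq (F(R))^*\circ R\circ (G(R))^*$. (ix) $R^-\subseteq F(R^-)\circ R\circ G(R^-)$, and $R\subseteq F(R)\circ R^-\circ G(R)$. (x) $R+S^-\subseteq (F(R)+F(S^-))\circ\overline{R\cup S}\circ(G(R)+G(S^-))\subseteq (F(R)+F(S^-))\circ R\circ S\circ(G(R)+G(S^-))$. (xi) $\mathrm{Cg}(R)\subseteq (F(R)+F(R^-))\circ R\circ (G(R)+G(R^-))$. (xii) For $n\ge 2$, $R_1\circ R_2\circ\dots\circ R_n\subseteq F(R_1)\circ\overline{F(R_1)\cup F(R_2)}\circ\overline{F(R_1)\cup F(R_2)\cup F(R_3)}\circ\dots\circ\overline{F(R_1)\cup\dots\cup F(R_{n-2})}\circ\overline{F(R_1)\cup\dots\cup F(R_{n-1})}\circ\overline{R_1\cup R_2\cup\dots\cup R_n}\circ\overline{G(R_2)\cup G(R_3)\cup\dots\cup G(R_n)}\circ\overline{G(R_3)\cup\dots\cup G(R_n)}\circ\dots\circ\overline{G(R_{n-2})\cup G(R_{n-1})\cup G(R_n)}\circ\overline{G(R_{n-1})\cup G(R_n)}\circ G(R_n)$. (xiii) $R_1+R_2+\dots+R_n\subseteq\big(F(R_1)+F(R_2)+\dots+F(R_n)\big)\circ\overline{R_1\cup R_2\cup\dots\cup R_n}\circ\big(G(R_1)+G(R_2)+\dots+G(R_n)\big)$.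 (xiv) $\mathrm{Cg}(R_1\cup R_2\cup\dots\cup R_n)\subseteq\big(F(R_1)+F(R_1^-)+F(R_2)+F(R_2^-)+\dots+F(R_n)+F(R_n^-)\big)\circ\overline{R_1\cup R_2\cup\dots\cup R_n}\circ\big(G(R_1)+G(R_1^-)+G(R_2)+G(R_2^-)+\dots+G(R_n)+G(R_n^-)\big)$.
   Context: ''Admissible'' and ''compatible'' mean the same thing (closed under the basic operations of the algebra, coordinatewise). Relational composition: $R\circ S=\{(a,c):\exists b\,(aRb \text{ and } bSc)\}$. $R\circ_n S$ denotes $R\circ S\circ R\circ S\circ\cdots$ with $n-1$ occurrences of $\circ$ (i.e. $n$ alternating factors starting with $R$). $R^n=R\circ_n R$, with the convention $R^0$ = the identity relation. $R+S=\bigcup_{n\ge1}R\circ_n S$, and $R_1+R_2+\dots+R_n$ is the analogous union of all finite compositions of the $R_i$ (iterated $+$). $R^-$ is the converse of $R$, $R^*$ is the transitive closure of $R$, $\mathrm{Cg}(R)$ is the smallest congruence containing $R$, and $\overline{R}$ denotes the least compatible relation containing $R$. *)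

(* Defs.v *)
From mathcomp Require Import all_boot.
From Stdlib Require Import Relation_Definitions Relation_Operators.
From Stdlib Require List.

Set Implicit Arguments.
Unset Strict Implicit.
Unset Printing Implicit Defensive.

Record signature := Signature { sym : Type ; arity : sym -> nat }.

Record algebra (sig : signature) := Algebra {
  carrier :> Type ;
  op : forall f : sym sig, ('I_(arity f) -> carrier) -> carrier }.

Inductive term (sig : signature) (V : Type) : Type :=
  | Var : V -> term sig V
  | App : forall f : sym sig, ('I_(arity f) -> term sig V) -> term sig V.

Fixpoint eval (sig : signature) (V : Type) (A : algebra sig)
    (env : V -> A) (t : term sig V) : A :=
  match t with
  | Var v => env v
  | App f ts => @op sig A f (fun i => @eval sig V A env (ts i))
  end.

Definition term3_val (sig : signature) (A : algebra sig)
    (t : term sig 'I_3) (a b c : A) : A :=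
  @eval sig 'I_3 A (fun i : 'I_3 => nth a [:: a; b; c] i) t.

Definition brel (T : Type) := T -> T -> Prop.

Definition rincl (T : Type) (R S : brel T) : Prop :=
  forall a b, R a b -> S a b.

Definition rcomp (T : Type) (R S : brel T) : brel T :=
  fun a c => exists b, R a b /\ S b c.

Definition runion (T : Type) (R S : brel T) : brel T :=
  fun a b => R a b \/ S a b.

Definition rconv (T : Type) (R : brel T) : brel T := fun a b => R b a.

Definition reflexive_rel (T : Type) (R : brel T) : Prop := forall a, R a a.

(* R o_n S : n alternating factors starting with R; o_0 = identity. *)
Fixpoint rcompn (T : Type) (n : nat) (R S : brel T) : brel T :=
  match n with
  | 0 => @eq T
  | n'.+1 => match n' with
             | 0 => R
             | _ => rcomp R (rcompn n' S R)
             end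
  end.

Definition rpow (T : Type) (R : brel T) (n : nat) : brel T := rcompn n R R.

Definition rplus (T : Type) (R S : brel T) : brel T :=
  fun a b => exists n, rcompn n.+1 R S a b.

Fixpoint rcomp_list (T : Type) (Rs : seq (brel T)) : brel T :=
  match Rs with
  | [::] => @eq T
  | R :: Rs' => rcomp R (rcomp_list Rs')
  end.

(* R_1 + ... + R_n : union of all finite (nonempty) compositions of
   relations taken from the list Rs. *)
Definition rsum (T : Type) (Rs : seq (brel T)) : brel T :=
  fun a b => exists s : seq (brel T),
    s <> [::] /\ (forall R, List.In R s -> List.In R Rs) /\ rcomp_list s a b.

Definition rbigU (T : Type) (P : nat -> brel T) (m n : nat) : brel T :=
  fun a b => exists i, m <= i <= n /\ P i a b.

Definition compatible (sig : signature) (A : algebra sig) (R : brel A) : Prop :=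
  forall (f : sym sig) (x y : 'I_(arity f) -> A),
    (forall i, R (x i) (y i)) -> R (@op sig A f x) (@op sig A f y).

Definition adm (sig : signature) (A : algebra sig) (R : brel A) : Prop :=
  reflexive_rel R /\ compatible R.

(* The least compatible relation containing R (overline R). *)
Definition rclo (sig : signature) (A : algebra sig) (R : brel A) : brel A :=
  fun a b => forall T : brel A, compatible T -> rincl R T -> T a b.

Definition congruence (sig : signature) (A : algebra sig) (R : brel A) : Prop :=
  equivalence A R /\ compatible R.

Definition Cg (sig : signature) (A : algebra sig) (R : brel A) : brel A :=
  fun a b => forall T : brel A, congruence T -> rincl R T -> T a b.

Definition malcev_mod (sig : signature) (A : algebra sig)
    (F G : brel A -> brel A) (t : term sig 'I_3) : Prop :=
  forall (a b : A) (R : brel A), adm R -> R a b ->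
    F R a (@term3_val sig A t a b b) /\ G R (@term3_val sig A t a a b) b.

(* Main.v *)
Require Import Defs.
From mathcomp Require Import all_boot.
From Stdlib Require Import Relation_Definitions Relation_Operators.
From Stdlib Require List.
From Stdlib Require Import Operators_Properties.
From Stdlib Require Import FunctionalExtensionality PropExtensionality ClassicalEpsilon.
From mathcomp Require Import zify.
From Stdlib Require Import Lia.

Set Implicit Arguments.
Unset Strict Implicit.



Lemma rel_ext (T : Type) (R S : brel T) :
  (forall a b, R a b <-> S a b) -> R = S.
Proof.
move=> H; apply: functional_extensionality => a;
apply: functional_extensionality => b; apply: propositional_extensionality; exact: H.
Qed.

Lemma eval_compat sig (A : algebra sig) (T : brel A) (V : Type) (t : term sig V)
  (e1 e2 : V -> A) :
  compatible T -> (forall v, T (e1 v) (e2 v)) -> T (eval e1 t) (eval e2 t).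
Proof.
move=> hT he; elim: t => [v|f ts IH] /=; first exact: he.
by apply: hT => i; apply: IH.
Qed.

Lemma term3_compat sig (A : algebra sig) (T : brel A) (t : term sig 'I_3)
  (a b c a' b' c' : A) :
  compatible T -> T a a' -> T b b' -> T c c' ->
  T (term3_val t a b c) (term3_val t a' b' c').
Proof.
move=> hT h1 h2 h3; apply: eval_compat => // v.
case: v => [[|[|[|i]]] Hi] //=.
Qed.

Lemma sub_rclo sig (A : algebra sig) (X : brel A) : rincl X (rclo X).
Proof. by move=> a b H T _ HT; exact: HT a b H. Qed.

Lemma rclo_compat sig (A : algebra sig) (X : brel A) : compatible (rclo X).
Proof. move=> f x y H T cT XT; apply: (cT) => i; exact: H i T cT XT. Qed.

Arguments rclo_compat {sig A} X.

Lemma rclo_min sig (A : algebra sig) (X T : brel A) :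
  compatible T -> rincl X T -> rincl (rclo X) T.
Proof. by move=> cT XT a b H; apply: H. Qed.

Lemma rclo_mono sig (A : algebra sig) (X Y : brel A) :
  rincl X Y -> rincl (rclo X) (rclo Y).
Proof.
move=> XY; apply: rclo_min; first exact: rclo_compat.
by move=> a b /XY; apply: sub_rclo.
Qed.

Lemma eq_compat sig (A : algebra sig) : compatible (@eq A).
Proof.
move=> f x y H; have -> : x = y by apply: functional_extensionality.
by [].
Qed.

Lemma comp_compat sig (A : algebra sig) (R S : brel A) :
  compatible R -> compatible S -> compatible (rcomp R S).
Proof.
move=> cR cS f x y H.
pose z i := proj1_sig (constructive_indefinite_description _ (H i)).
have Hz i : R (x i) (z i) /\ S (z i) (y i).
  by rewrite /z; case: (constructive_indefinite_description _ _).
exists (op z); split; [apply: cR | apply: cS] => i; by case: (Hz i).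
Qed.

Lemma rcomp_list_compat sig (A : algebra sig) (l : seq (brel A)) :
  (forall R, List.In R l -> compatible R) -> compatible (rcomp_list l).
Proof.
elim: l => [|R l IH] H /=; first exact: eq_compat.
apply: comp_compat; first by apply: H; left.
by apply: IH => X HX; apply: H; right.
Qed.

Lemma rcompn_compat sig (A : algebra sig) (R S : brel A) n :
  compatible R -> compatible S -> compatible (rcompn n R S).
Proof.
elim: n R S => [|n IH] R S cR cS; first exact: eq_compat.
case: n IH => [|n] IH //=.
by apply: comp_compat => //; apply: IH.
Qed.

Lemma rpow_compat sig (A : algebra sig) (R : brel A) n :
  compatible R -> compatible (rpow R n).
Proof. by move=> cR; apply: rcompn_compat. Qed.

Lemma conv_adm sig (A : algebra sig) (R : brel A) : adm R -> adm (rconv R).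
Proof. by case=> rR cR; split=> [a|f x y H]; [apply: rR | apply: cR]. Qed.

Definition upd sig (A : algebra sig) (f : sym sig) (z : 'I_(arity f) -> A)
  (k : 'I_(arity f)) (u : A) : 'I_(arity f) -> A :=
  fun i => if i == k then u else z i.

Lemma ct_compat sig (A : algebra sig) (T : brel A) :
  (forall a, T a a) ->
  (forall u v, T u v -> exists R, adm R /\ R u v /\ rincl R T) ->
  compatible (clos_trans A T).
Proof.
move=> rT hT f x y H.
have step z k u v : clos_trans A T u v ->
    clos_trans A T (op (upd z k u)) (op (upd z k v)).
  elim=> [u' v' /hT [R [[rR cR] [Ruv RT]]]| u' w v' _ IH1 _ IH2].
    apply: t_step; apply: RT; apply: cR => i; rewrite /upd.
    by case: (i == k).
  exact: t_trans IH1 IH2.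
pose w j := fun i : 'I_(arity f) => if (i < j)%N then y i else x i.
have Hw j : clos_trans A T (op x) (op (w j)).
  elim: j => [|j IH].
    have -> : w 0 = x by apply: functional_extensionality.
    exact: t_step.
  case: (ltnP j (arity f)) => hj.
    apply: t_trans IH _.
    pose k := Ordinal hj.
    have -> : w j = upd (w j) k (x k).
      apply: functional_extensionality => i; rewrite /upd /w.
      case: (i =P k) => [->|] //=; by rewrite ltnn.
    have -> : w j.+1 = upd (w j) k (y k).
      apply: functional_extensionality => i; rewrite /upd /w ltnS leq_eqVlt.
      case: (i =P k) => [->|hik] /=; first by rewrite eqxx.
      suff -> : (nat_of_ord i == j) = false by [].
      by apply/eqP => hij; apply: hik; apply: val_inj.
    exact: step.
  have -> : w j.+1 = w j; last exact: IH.
  apply: functional_extensionality => i; rewrite /w.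
  have h1 : (i < j)%N by apply: leq_trans (ltn_ord i) hj.
  by rewrite h1 (ltn_trans h1 (ltnSn j)).
have -> : y = w (arity f).
  by apply: functional_extensionality => i; rewrite /w ltn_ord.
exact: Hw.
Qed.



Lemma key sig (A : algebra sig) (F G : brel A -> brel A) (t : term sig 'I_3)
  (ht : malcev_mod F G t) (R S T : brel A) (a b c d : A) :
  adm R -> adm S -> compatible T -> R a b -> S d c -> T a d -> T b d -> T b c ->
  rcomp (F R) (rcomp T (G S)) a c.
Proof.
move=> aR aS cT Rab Sdc Tad Tbd Tbc.
exists (term3_val t a b b); split; first by case: (ht a b R aR Rab).
exists (term3_val t d d c); split; first exact: term3_compat.
by case: (ht d c S aS Sdc).
Qed.

Definition fam (T : Type) (P : brel T -> Prop) : brel T :=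
  fun a b => exists R, P R /\ R a b.
Definition img (T : Type) (P : brel T -> Prop) (F : brel T -> brel T) :=
  fun X => exists R, P R /\ X = F R.

Lemma ct_mono (T : Type) (R S : brel T) :
  rincl R S -> rincl (clos_trans T R) (clos_trans T S).
Proof.
move=> RS a b; elim=> [x y /RS|x y z _ H1 _ H2]; first exact: t_step.
exact: t_trans H1 H2.
Qed.

Lemma fam_ct_compat sig (A : algebra sig) (Q : brel A -> Prop) :
  (forall R, Q R -> adm R) -> (exists R, Q R) -> compatible (clos_trans A (fam Q)).
Proof.
move=> hQ [R0 Q0]; apply: ct_compat.
  by move=> a; exists R0; split => //; case: (hQ R0 Q0).
move=> u v [R [QR Ruv]]; exists R; split; first exact: hQ.
by split=> // x y Rxy; exists R.
Qed.

Lemma img_adm sig (A : algebra sig) (P : brel A -> Prop) (F : brel A -> brel A) :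
  (forall R, adm R -> adm (F R)) -> (forall R, P R -> adm R) ->
  forall X, img P F X -> adm X.
Proof. by move=> hF hP X [R [PR ->]]; apply/hF/hP. Qed.

Fixpoint pw (T : Type) (U : brel T) (n : nat) : brel T :=
  match n with 0 => @eq T | n'.+1 => rcomp U (pw U n') end.

Lemma pw_add (T : Type) (U : brel T) m n a b c :
  pw U m a b -> pw U n b c -> pw U (m + n) a c.
Proof.
elim: m a => [|m IH] a /=; first by move=> ->.
by case=> x [Uax Hx] Hn; exists x; split => //; apply: IH Hn.
Qed.

Lemma ct_pw (T : Type) (U : brel T) a b :
  clos_trans T U a b -> exists n, pw U n.+1 a b.
Proof.
elim=> [x y Uxy|x y z _ [m H1] _ [n H2]]; first by exists 0; exists y.
by exists (m.+1 + n); rewrite -addnS; apply: (pw_add H1 H2).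
Qed.

Lemma pw_unsnoc (T : Type) (U : brel T) n a c :
  pw U n.+1 a c -> exists b, pw U n a b /\ U b c.
Proof.
elim: n a => [|n IH] a.
  by case=> x [Uax <-]; exists a.
case=> x [Uax /IH [b [Hb Ubc]]]; exists b; split => //; by exists x.
Qed.


Lemma core sig (A : algebra sig) (F G : brel A -> brel A) (t : term sig 'I_3)
  (ht : malcev_mod F G t)
  (hF : forall R : brel A, adm R -> adm (F R))
  (hG : forall R : brel A, adm R -> adm (G R))
  (P : brel A -> Prop) (M : brel A) :
  (forall R, P R -> adm R) -> (exists R, P R) -> compatible M ->
  (forall R a c, P R -> R a c ->
     rcomp (clos_trans A (fam (img P F)))
       (rcomp M (clos_trans A (fam (img P G)))) a c) ->
  rincl (clos_trans A (fam P))
     (rcomp (clos_trans A (fam (img P F)))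
       (rcomp M (clos_trans A (fam (img P G))))).
Proof.
move=> hP [R0 P0] cM H0.
pose Tg := rcomp (clos_trans A (fam (img P F)))
       (rcomp M (clos_trans A (fam (img P G)))).
change (rincl (clos_trans A (fam P)) Tg); move=> a c Hac; have [n] := ct_pw Hac; clear Hac.
have cT : compatible Tg.
  have c1 : compatible (clos_trans A (fam (img P F))).
    by apply: fam_ct_compat; [exact: img_adm | exists (F R0), R0].
  have c2 : compatible (clos_trans A (fam (img P G))).
    by apply: fam_ct_compat; [exact: img_adm | exists (G R0), R0].
  by apply: comp_compat => //; apply: comp_compat.
elim: n a c => [|n IH] a c.
  by case=> x [[R [PR Rax]] <-]; apply: H0 PR Rax.
case=> x1 [[R1 [P1 R1a]] Hrest].
have Tbc := IH _ _ Hrest.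
have [x' [Hth [Rk [Pk Rkc]]]] := pw_unsnoc Hrest.
have Tad : Tg a x' by apply: IH; exists x1; split => //; exists R1.
have Tbd : Tg x1 x'.
  apply: IH; exists x1; split => //; exists R1; split => //.
  by case: (hP R1 P1) => rR _; apply: rR.
have [u [Fau [v [[p [Hup [q [Mpq Hqv]]]] Gvc]]]] :=
  key ht (hP R1 P1) (hP Rk Pk) cT R1a Rkc Tad Tbd Tbc.
exists p; split.
  apply: t_trans Hup; apply: t_step; exists (F R1); split => //; by exists R1.
exists q; split => //.
apply: t_trans Hqv _; apply: t_step; exists (G Rk); split => //; by exists Rk.
Qed.



Lemma rcompn_ct (T : Type) n (X Y : brel T) a b :
  rcompn n.+1 X Y a b -> clos_trans T (runion X Y) a b.
Proof.
elim: n X Y a b => [|n IH] X Y a b; first by move=> H; apply: t_step; left.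
case=> m [Xam Hm]; apply: t_trans (t_step _ _ _ _ (or_introl Xam)) _.
apply: ct_mono (IH _ _ _ _ Hm) => u v [H|H]; [by right | by left].
Qed.

Lemma ct_rplus (T : Type) (X Y : brel T) :
  reflexive_rel X -> reflexive_rel Y ->
  rincl (clos_trans T (runion X Y)) (rplus X Y).
Proof.
move=> rX rY a b Hab; have := clos_trans_t1n _ _ _ _ Hab; clear Hab; elim => [x y [H|H]|x y z [H|H] _ [n Hn]].
- by exists 0.
- by exists 1; exists x; split.
- by exists n.+2; exists y; split => //; exists y; split.
- by exists n.+2; exists x; split => //; exists y; split.
Qed.

Lemma In_cat (T : Type) (x : T) (s1 s2 : seq T) :
  List.In x (s1 ++ s2) <-> List.In x s1 \/ List.In x s2.
Proof.
elim: s1 => [|y s1 IH] /=; first by split => [H|[[]|H]] //; right.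
rewrite IH; tauto.
Qed.

Lemma rcomp_list_cat (T : Type) (s1 s2 : seq (brel T)) a b c :
  rcomp_list s1 a b -> rcomp_list s2 b c -> rcomp_list (s1 ++ s2) a c.
Proof.
elim: s1 a => [|R s1 IH] a /=; first by move=> ->.
by case=> m [Ram Hm] H2; exists m; split => //; apply: IH Hm H2.
Qed.

Lemma rsum_ct (T : Type) (Rs : seq (brel T)) a b :
  rsum Rs a b <-> clos_trans T (fam (fun X => List.In X Rs)) a b.
Proof.
split.
  case=> s [ne [sub H]]; elim: s ne sub a H => [//|R s IH] _ sub a [m [Ram Hm]].
  case: s IH sub Hm => [|R' s] IH sub Hm.
    by apply: t_step; exists R; split; [apply: sub; left | rewrite -Hm].
  apply: t_trans (t_step _ _ _ _ _) (IH _ _ _ Hm) => //.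
    by exists R; split => //; apply: sub; left.
  by move=> X HX; apply: sub; right.
elim=> [x y [R [HR Rxy]]|x y z _ [s1 [n1 [u1 H1]]] _ [s2 [n2 [u2 H2]]]].
  by exists [:: R]; split => //; split => [X [<-|[]]|] //; exists y.
exists (s1 ++ s2); split; first by case: s1 n1 {u1 H1}.
split; last exact: rcomp_list_cat H1 H2.
by move=> X /In_cat [H|H]; [apply: u1 | apply: u2].
Qed.

Lemma In_map_iota (T : Type) (f : nat -> T) (X : T) m n :
  List.In X [seq f i | i <- iota m n] <-> exists i, m <= i < m + n /\ X = f i.
Proof.
elim: n m => [|n IH] m /=.
  by split => // -[i [/andP [h1 h2]]]; lia.
rewrite IH; split.
  case=> [<-|[i [/andP [h1 h2] ->]]]; first by exists m; split => //; apply/andP; lia.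
  by exists i; split => //; apply/andP; lia.
case=> i [/andP [h1 h2] ->]; case: (ltngtP m i) h1 => // [hmi|->] _; last by left.
by right; exists i; split => //; apply/andP; lia.
Qed.

Lemma In_flatten (T U : Type) (f : U -> seq T) (s : seq U) i x :
  List.In i s -> List.In x (f i) -> List.In x (flatten [seq f j | j <- s]).
Proof.
elim: s => [//|j s IH] /= [->|Hi] Hx; apply/In_cat; first by left.
by right; apply: IH.
Qed.



Definition tgt sig (A : algebra sig) (F G : brel A -> brel A) (P : brel A -> Prop)
  (M : brel A) :=
  rcomp (clos_trans A (fam (img P F))) (rcomp M (clos_trans A (fam (img P G)))).

Lemma base_fwd sig (A : algebra sig) (F G : brel A -> brel A) (t : term sig 'I_3)
  (ht : malcev_mod F G t) P M X a c :
  P X -> adm X -> compatible M -> M a c -> M c c -> X a c -> tgt F G P M a c.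
Proof.
move=> PX aX cM Mac Mcc Xac; exists (term3_val t a c c); split.
  by apply: t_step; exists (F X); split; [exists X | case: (ht a c X aX Xac)].
exists (term3_val t c c c); split; first exact: term3_compat.
apply: t_step; exists (G X); split; first by exists X.
by case: (ht c c X aX); case: aX.
Qed.

Lemma base_conv sig (A : algebra sig) (F G : brel A -> brel A) (t : term sig 'I_3)
  (ht : malcev_mod F G t) P M X a c :
  P (rconv X) -> adm X -> compatible M -> M a a -> M c a -> M c c -> X c a ->
  tgt F G P M a c.
Proof.
move=> PX aX cM Maa Mca Mcc Xca; have aX' := conv_adm aX.
exists (term3_val t a c c); split.
  apply: t_step; exists (F (rconv X)); split; first by exists (rconv X).
  by case: (ht a c (rconv X) aX' Xca).
exists (term3_val t a a c); split; first exact: term3_compat.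
apply: t_step; exists (G (rconv X)); split; first by exists (rconv X).
by case: (ht a c (rconv X) aX' Xca).
Qed.

Lemma tgt_mono sig (A : algebra sig) (F G : brel A -> brel A) P M X M' Y :
  rincl (fam (img P F)) X -> rincl M M' -> rincl (fam (img P G)) Y ->
  rincl (tgt F G P M) (rcomp (clos_trans A X) (rcomp M' (clos_trans A Y))).
Proof.
move=> h1 h2 h3 a b [u [Hu [v [Muv Hv]]]]; exists u; split; first exact: ct_mono Hu.
by exists v; split; [apply: h2 | apply: ct_mono Hv].
Qed.

Lemma ct_sym (T : Type) (U : brel T) :
  (forall a b, U a b -> U b a) -> forall a b, clos_trans T U a b -> clos_trans T U b a.
Proof.
move=> hU a b; elim=> [x y /hU|x y z _ H1 _ H2]; first exact: t_step.
exact: t_trans H2 H1.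
Qed.

Lemma In_iota i m n : List.In i (iota m n) <-> m <= i < m + n.
Proof.
elim: n m => [|n IH] m /=; first by split => // /andP [h1 h2]; lia.
rewrite IH; split; first by case=> [<-|/andP [h1 h2]]; apply/andP; lia.
move=> /andP [h1 h2]; case: (ltngtP m i) h1 => // [hmi|->] _; last by left.
by right; apply/andP; lia.
Qed.




Lemma item1 sig (A : algebra sig) (F G : brel A -> brel A) (t : term sig 'I_3)
  (ht : malcev_mod F G t) :
  (forall (R S th th1 th2 : brel A) (a b c d : A),
     adm R -> adm S ->
     R a b -> th1 b c -> th2 a d -> S d c -> th b d ->
     rcomp (F R) (rcomp (rclo (runion th2 (runion th th1))) (G S)) a c).
Proof.
move=> R S th th1 th2 a b c d aR aS Rab th1bc th2ad Sdc thbd.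
apply: (key ht aR aS (rclo_compat _) Rab Sdc); apply: sub_rclo.
- by left.
- by right; left.
- by right; right.
Qed.

Lemma item2 sig (A : algebra sig) (F G : brel A -> brel A) (t : term sig 'I_3)
  (ht : malcev_mod F G t) :
  (forall (R S th : brel A), adm R -> adm S ->
     rincl (rcomp R (rcomp th S))
            (rcomp (F R) (rcomp (rclo (runion (rcomp R th) (rcomp th S))) (G S)))).
Proof.
move=> R S th aR aS a c [b [Rab [d [thbd Sdc]]]].
apply: (key ht aR aS (rclo_compat _) Rab Sdc); apply: sub_rclo.
- by left; exists b.
- by left; exists b; split => //; case: aR.
- by right; exists d.
Qed.

Lemma rclo_union_comp sig (A : algebra sig) (R S : brel A) :
  adm R -> adm S -> rincl (rclo (runion R S)) (rcomp S R).
Proof.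
move=> [rR cR] [rS cS]; apply: rclo_min; first exact: comp_compat.
by move=> a b [H|H]; [exists a | exists b].
Qed.

Lemma item3 sig (A : algebra sig) (F G : brel A -> brel A) (t : term sig 'I_3)
  (ht : malcev_mod F G t) :
  (forall (R S : brel A), adm R -> adm S ->
     rincl (rcomp R S) (rcomp (F R) (rcomp (rclo (runion R S)) (G S))) /\
     rincl (rcomp (F R) (rcomp (rclo (runion R S)) (G S)))
            (rcomp (F R) (rcomp S (rcomp R (G S))))).
Proof.
move=> R S aR aS; split.
  move=> a c [b [Rab Sbc]].
  apply: (key ht aR aS (rclo_compat _) Rab Sbc); apply: sub_rclo.
  - by left.
  - by left; case: aR.
  - by right.
move=> a c [u [Fau [v [Muv Gvc]]]]; exists u; split => //.
have [w [Suw Rwv]] := rclo_union_comp aR aS Muv.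
by exists w; split => //; exists v.
Qed.

Lemma item6 sig (A : algebra sig) (F G : brel A -> brel A) (t : term sig 'I_3)
  (ht : malcev_mod F G t) :
  (forall R : brel A, adm R ->
     rincl (rcomp R R) (rcomp (F R) (rcomp R (G R)))).
Proof.
move=> R aR a c H; have [u [Fau [v [Muv Gvc]]]] := (item3 ht aR aR).1 a c H.
exists u; split => //; exists v; split => //.
case: (aR) => rR cR; apply: (rclo_min cR _ Muv) => x y; by case.
Qed.

Lemma item9 sig (A : algebra sig) (F G : brel A -> brel A) (t : term sig 'I_3)
  (ht : malcev_mod F G t) :
  (forall R : brel A, adm R ->
     rincl (rconv R) (rcomp (F (rconv R)) (rcomp R (G (rconv R)))) /\
     rincl R (rcomp (F R) (rcomp (rconv R) (G R)))).
Proof.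
move=> R aR; have aR' := conv_adm aR; case: (aR) => rR cR; split.
  move=> a b Hab; exists (term3_val t a b b); split; first by case: (ht a b _ aR' Hab).
  exists (term3_val t a a b); split; first exact: term3_compat.
  by case: (ht a b _ aR' Hab).
move=> a b Hab; exists (term3_val t a b b); split; first by case: (ht a b _ aR Hab).
exists (term3_val t a a b); split; first by rewrite /rconv; apply: term3_compat.
by case: (ht a b _ aR Hab).
Qed.

Lemma item8 sig (A : algebra sig) (F G : brel A -> brel A) (t : term sig 'I_3)
  (ht : malcev_mod F G t)
  (hF : forall R : brel A, adm R -> adm (F R))
  (hG : forall R : brel A, adm R -> adm (G R)) :
  (forall R : brel A, adm R ->
     rincl (clos_trans A R)
            (rcomp (clos_trans A (F R)) (rcomp R (clos_trans A (G R))))).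
Proof.
move=> R aR a b Hab.
pose P := fun X : brel A => X = R.
have H1 : clos_trans A (fam P) a b by apply: ct_mono Hab => x y H; exists R.
case: (aR) => rR cR.
have HT : rincl (clos_trans A (fam P)) (tgt F G P R).
  apply: (core ht hF hG).
  - by move=> X ->.
  - by exists R.
  - exact: cR.
  - by move=> X x y -> Rxy; apply: (base_fwd ht _ aR cR Rxy (rR y) Rxy).
apply: (tgt_mono (P := P) (M := R) _ _ _ (HT a b H1)).
- by move=> x y [X [[R' [-> ->]] H]].
- by [].
- by move=> x y [X [[R' [-> ->]] H]].
Qed.



Lemma rclo_union_comp2 sig (A : algebra sig) (R S : brel A) :
  adm R -> adm S -> rincl (rclo (runion R S)) (rcomp R S).
Proof.
move=> [rR cR] [rS cS]; apply: rclo_min; first exact: comp_compat.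
by move=> a b [H|H]; [exists b | exists a].
Qed.

Lemma ct_rplus_out sig (A : algebra sig) (F G : brel A -> brel A) P M X1 X2 Y1 Y2 :
  reflexive_rel X1 -> reflexive_rel X2 -> reflexive_rel Y1 -> reflexive_rel Y2 ->
  rincl (fam (img P F)) (runion X1 X2) -> rincl (fam (img P G)) (runion Y1 Y2) ->
  rincl (tgt F G P M) (rcomp (rplus X1 X2) (rcomp M (rplus Y1 Y2))).
Proof.
move=> r1 r2 r3 r4 h1 h2 a b H.
have [u [Hu [v [Muv Hv]]]] := tgt_mono h1 (fun x y (H : M x y) => H) h2 H.
exists u; split; first exact: ct_rplus.
by exists v; split => //; apply: ct_rplus.
Qed.

Lemma item5 sig (A : algebra sig) (F G : brel A -> brel A) (t : term sig 'I_3)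
  (ht : malcev_mod F G t)
  (hF : forall R : brel A, adm R -> adm (F R))
  (hG : forall R : brel A, adm R -> adm (G R)) :
  (forall (R S : brel A), adm R -> adm S ->
     rincl (rplus R S)
            (rcomp (rplus (F R) (F S)) (rcomp (rclo (runion R S)) (rplus (G R) (G S)))) /\
     rincl (rcomp (rplus (F R) (F S)) (rcomp (rclo (runion R S)) (rplus (G R) (G S))))
            (rcomp (rplus (F R) (F S)) (rcomp R (rcomp S (rplus (G R) (G S)))))).
Proof.
move=> R S aR aS; case: (aR) => rR cR; case: (aS) => rS cS.
pose P := fun X => X = R \/ X = S.
pose M := rclo (runion R S).
have HT : rincl (clos_trans A (fam P)) (tgt F G P M).
  apply: (core ht hF hG).
  - by move=> X [->|->].
  - by exists R; left.
  - exact: rclo_compat.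
  - move=> X x y [->|->] Hxy.
    + apply: (base_fwd ht _ aR (rclo_compat _) _ _ Hxy); first by left.
      * by apply: sub_rclo; left.
      * by apply: sub_rclo; left; apply: rR.
    + apply: (base_fwd ht _ aS (rclo_compat _) _ _ Hxy); first by right.
      * by apply: sub_rclo; right.
      * by apply: sub_rclo; right; apply: rS.
split.
  move=> a b [n Hn]; eapply (ct_rplus_out (F := F) (G := G) (P := P) (M := M)).
  - by case: (hF R aR).
  - by case: (hF S aS).
  - by case: (hG R aR).
  - by case: (hG S aS).
  - by move=> x y [X [[R' [[->|->] ->]] H]]; [left|right].
  - by move=> x y [X [[R' [[->|->] ->]] H]]; [left|right].
  apply: HT; apply: ct_mono (rcompn_ct Hn) => x y [H|H].
    by exists R; split => //; left.
  by exists S; split => //; right.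
move=> a b [u [Hu [v [Muv Hv]]]]; exists u; split => //.
have [w [Ruw Swv]] := rclo_union_comp2 aR aS Muv.
by exists w; split => //; exists v.
Qed.

Lemma item10 sig (A : algebra sig) (F G : brel A -> brel A) (t : term sig 'I_3)
  (ht : malcev_mod F G t)
  (hF : forall R : brel A, adm R -> adm (F R))
  (hG : forall R : brel A, adm R -> adm (G R)) :
  (forall (R S : brel A), adm R -> adm S ->
     rincl (rplus R (rconv S))
            (rcomp (rplus (F R) (F (rconv S)))
                   (rcomp (rclo (runion R S)) (rplus (G R) (G (rconv S))))) /\
     rincl (rcomp (rplus (F R) (F (rconv S)))
                   (rcomp (rclo (runion R S)) (rplus (G R) (G (rconv S)))))
            (rcomp (rplus (F R) (F (rconv S)))
                   (rcomp R (rcomp S (rplus (G R) (G (rconv S))))))).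
Proof.
move=> R S aR aS; case: (aR) => rR cR; case: (aS) => rS cS.
have aS' := conv_adm aS.
pose P := fun X => X = R \/ X = rconv S.
pose M := rclo (runion R S).
have HT : rincl (clos_trans A (fam P)) (tgt F G P M).
  apply: (core ht hF hG).
  - by move=> X [->|->].
  - by exists R; left.
  - exact: rclo_compat.
  - move=> X x y [->|->] Hxy.
    + apply: (base_fwd ht _ aR (rclo_compat _) _ _ Hxy); first by left.
      * by apply: sub_rclo; left.
      * by apply: sub_rclo; left; apply: rR.
    + apply: (base_conv ht (X := S) _ aS (rclo_compat _) _ _ _ Hxy); first by right.
      * by apply: sub_rclo; left; apply: rR.
      * by apply: sub_rclo; right.
      * by apply: sub_rclo; left; apply: rR.
split.
  move=> a b [n Hn]; eapply (ct_rplus_out (F := F) (G := G) (P := P) (M := M)).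
  - by case: (hF R aR).
  - by case: (hF _ aS').
  - by case: (hG R aR).
  - by case: (hG _ aS').
  - by move=> x y [X [[R' [[->|->] ->]] H]]; [left|right].
  - by move=> x y [X [[R' [[->|->] ->]] H]]; [left|right].
  apply: HT; apply: ct_mono (rcompn_ct Hn) => x y [H|H].
    by exists R; split => //; left.
  by exists (rconv S); split => //; right.
move=> a b [u [Hu [v [Muv Hv]]]]; exists u; split => //.
have [w [Ruw Swv]] := rclo_union_comp2 aR aS Muv.
by exists w; split => //; exists v.
Qed.

Lemma item11 sig (A : algebra sig) (F G : brel A -> brel A) (t : term sig 'I_3)
  (ht : malcev_mod F G t)
  (hF : forall R : brel A, adm R -> adm (F R))
  (hG : forall R : brel A, adm R -> adm (G R)) :
  (forall R : brel A, adm R ->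
     rincl (Cg R)
            (rcomp (rplus (F R) (F (rconv R)))
                   (rcomp R (rplus (G R) (G (rconv R)))))).
Proof.
move=> R aR; case: (aR) => rR cR.
have aR' := conv_adm aR.
pose P := fun X => X = R \/ X = rconv R.
have HT : rincl (clos_trans A (fam P)) (tgt F G P R).
  apply: (core ht hF hG).
  - by move=> X [->|->].
  - by exists R; left.
  - exact: cR.
  - move=> X x y [->|->] Hxy.
    + by apply: (base_fwd ht _ aR cR Hxy (rR y) Hxy); left.
    + by apply: (base_conv ht (X := R) _ aR cR (rR x) Hxy (rR y) Hxy); right.
move=> a b Hab; eapply (ct_rplus_out (F := F) (G := G) (P := P) (M := R)).
- by case: (hF R aR).
- by case: (hF _ aR').
- by case: (hG R aR).
- by case: (hG _ aR').
- by move=> x y [X [[R' [[->|->] ->]] H]]; [left|right].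
- by move=> x y [X [[R' [[->|->] ->]] H]]; [left|right].
apply: HT; apply: Hab.
- split; last by apply: fam_ct_compat; [move=> X [->|->] | exists R; left].
  constructor.
  + by move=> x; apply: t_step; exists R; split; [left | apply: rR].
  + by move=> x y z; apply: t_trans.
  + move=> x y; apply: ct_sym => u v [X [[->|->] H]].
    * by exists (rconv R); split => //; right.
    * by exists R; split => //; left.
- by move=> x y H; apply: t_step; exists R; split => //; left.
Qed.

Lemma item13 sig (A : algebra sig) (F G : brel A -> brel A) (t : term sig 'I_3)
  (ht : malcev_mod F G t)
  (hF : forall R : brel A, adm R -> adm (F R))
  (hG : forall R : brel A, adm R -> adm (G R)) :
  (forall (Rf : nat -> brel A) (n : nat), 1 <= n ->
     (forall i, 1 <= i <= n -> adm (Rf i)) ->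
     rincl (rsum [seq Rf i | i <- iota 1 n])
       (rcomp (rsum [seq F (Rf i) | i <- iota 1 n])
              (rcomp (rclo (rbigU Rf 1 n))
                     (rsum [seq G (Rf i) | i <- iota 1 n])))).
Proof.
move=> Rf n hn hR.
pose P := fun X => List.In X [seq Rf i | i <- iota 1 n].
pose M := rclo (rbigU Rf 1 n).
have hP : forall X, P X -> exists i, 1 <= i <= n /\ X = Rf i.
  move=> X /In_map_iota [i [/andP [h1 h2] ->]]; exists i; split => //.
  by apply/andP; lia.
have HT : rincl (clos_trans A (fam P)) (tgt F G P M).
  apply: (core ht hF hG).
  - by move=> X /hP [i [hi ->]]; apply: hR.
  - by exists (Rf 1); apply/In_map_iota; exists 1; split => //; apply/andP; lia.
  - exact: rclo_compat.
  - move=> X x y PX Hxy; have [i [hi EX]] := hP X PX; subst X.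
    have [rX cX] := hR i hi.
    apply: (base_fwd ht PX (hR i hi) (rclo_compat _) _ _ Hxy).
    + by apply: sub_rclo; exists i.
    + by apply: sub_rclo; exists i; split => //; apply: rX.
move=> a b /rsum_ct Hab.
have [u [Hu [v [Muv Hv]]]] := HT a b Hab.
exists u; split.
  apply/rsum_ct; apply: ct_mono Hu => x y [X [[R' [/hP [i [hi ->]] ->]] H]].
  by exists (F (Rf i)); split => //; apply/In_map_iota; exists i; split => //; apply/andP; lia.
exists v; split => //.
apply/rsum_ct; apply: ct_mono Hv => x y [X [[R' [/hP [i [hi ->]] ->]] H]].
by exists (G (Rf i)); split => //; apply/In_map_iota; exists i; split => //; apply/andP; lia.
Qed.

Lemma item14 sig (A : algebra sig) (F G : brel A -> brel A) (t : term sig 'I_3)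
  (ht : malcev_mod F G t)
  (hF : forall R : brel A, adm R -> adm (F R))
  (hG : forall R : brel A, adm R -> adm (G R)) :
  (forall (Rf : nat -> brel A) (n : nat), 1 <= n ->
     (forall i, 1 <= i <= n -> adm (Rf i)) ->
     rincl (Cg (rbigU Rf 1 n))
       (rcomp (rsum (flatten [seq [:: F (Rf i); F (rconv (Rf i))] | i <- iota 1 n]))
              (rcomp (rclo (rbigU Rf 1 n))
                     (rsum (flatten [seq [:: G (Rf i); G (rconv (Rf i))] | i <- iota 1 n]))))).
Proof.
move=> Rf n hn hR.
pose P := fun X => exists i, 1 <= i <= n /\ (X = Rf i \/ X = rconv (Rf i)).
pose M := rclo (rbigU Rf 1 n).
have hP : forall X, P X -> adm X.
  by move=> X [i [hi [->|->]]]; [apply: hR | apply/conv_adm/hR].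
have h1 : 1 <= 1 <= n by apply/andP; lia.
have HT : rincl (clos_trans A (fam P)) (tgt F G P M).
  apply: (core ht hF hG).
  - exact: hP.
  - by exists (Rf 1); exists 1; split => //; left.
  - exact: rclo_compat.
  - move=> X x y [i [hi [EX|EX]]] Hxy; subst X; have [rX cX] := hR i hi.
    + apply: (base_fwd ht _ (hR i hi) (rclo_compat _) _ _ Hxy).
      * by exists i; split => //; left.
      * by apply: sub_rclo; exists i.
      * by apply: sub_rclo; exists i; split => //; apply: rX.
    + apply: (base_conv ht (X := Rf i) _ (hR i hi) (rclo_compat _) _ _ _ Hxy).
      * by exists i; split => //; right.
      * by apply: sub_rclo; exists i; split => //; apply: rX.
      * by apply: sub_rclo; exists i.
      * by apply: sub_rclo; exists i; split => //; apply: rX.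
move=> a b Hab.
have Hab' : clos_trans A (fam P) a b.
  apply: Hab.
  - split; last by apply: fam_ct_compat => //; exists (Rf 1), 1; split => //; left.
    constructor.
    + move=> x; apply: t_step; exists (Rf 1); split; first by exists 1; split => //; left.
      by case: (hR 1 h1).
    + by move=> x y z; apply: t_trans.
    + move=> x y; apply: ct_sym => u v [X [[i [hi [->|->]]] H]].
      * by exists (rconv (Rf i)); split => //; exists i; split => //; right.
      * by exists (Rf i); split => //; exists i; split => //; left.
  - by move=> x y [i [hi H]]; apply: t_step; exists (Rf i); split => //; exists i; split => //; left.
have [u [Hu [v [Muv Hv]]]] := HT a b Hab'.
have hi' : forall i, 1 <= i <= n -> List.In i (iota 1 n).
  by move=> i /andP [h2 h3]; apply/In_iota; apply/andP; lia.
exists u; split.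
  apply/rsum_ct; apply: ct_mono Hu => x y [X [[R' [[i [hi [->|->]]] ->]] H]].
  - exists (F (Rf i)); split => //.
    by apply: (In_flatten (hi' i hi)); left.
  - exists (F (rconv (Rf i))); split => //.
    by apply: (In_flatten (hi' i hi)); right; left.
exists v; split => //.
apply/rsum_ct; apply: ct_mono Hv => x y [X [[R' [[i [hi [->|->]]] ->]] H]].
- exists (G (Rf i)); split => //.
  by apply: (In_flatten (hi' i hi)); left.
- exists (G (rconv (Rf i))); split => //.
  by apply: (In_flatten (hi' i hi)); right; left.
Qed.



Lemma rpow_pw (T : Type) (X : brel T) n a b : rpow X n a b <-> pw X n a b.
Proof.
rewrite /rpow; elim: n a => [|n IH] a //=.
case: n IH => [|n] IH /=.
  by split => [H|[x [H <-]]] //; exists b.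
by split => -[x [H1 H2]]; exists x; split => //; apply/IH.
Qed.

Lemma pw_snoc (T : Type) (U : brel T) n a b c :
  pw U n a b -> U b c -> pw U n.+1 a c.
Proof.
move=> H1 H2; rewrite -addn1; apply: (pw_add H1); by exists c.
Qed.

Lemma pw_mono (T : Type) (U V : brel T) n :
  rincl U V -> rincl (pw U n) (pw V n).
Proof.
move=> UV; elim: n => [|n IH] a b //= [x [H1 H2]].
by exists x; split; [apply: UV | apply: IH].
Qed.

Lemma rpow_mono (T : Type) (U V : brel T) n :
  rincl U V -> rincl (rpow U n) (rpow V n).
Proof. by move=> UV a b /rpow_pw H; apply/rpow_pw; apply: pw_mono H. Qed.

Lemma rcompn_snoc (T : Type) n (R S : brel T) a c :
  rcompn n.+2 R S a c <->
  exists b, rcompn n.+1 R S a b /\ (if odd n then R else S) b c.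
Proof.
elim: n R S a c => [|n IH] R S a c; first by [].
have -> : (if odd n.+1 then R else S) = (if odd n then S else R).
  by rewrite /=; case: (odd n).
split.
  case=> m [Ram /IH [b [Hb Hbc]]]; exists b; split => //; by exists m.
case=> b [[m [Ram Hmb]] Hbc]; exists m; split => //; apply/IH; by exists b.
Qed.

Lemma wrap (T : Type) (X P P' M M' Q Q' Y : brel T) n :
  rincl X P -> rincl P' P -> rincl M' M -> rincl Q' Q -> rincl Y Q ->
  rincl (rcomp X (rcomp (rpow P' n) (rcomp M' (rcomp (rpow Q' n) Y))))
        (rcomp (rpow P n.+1) (rcomp M (rpow Q n.+1))).
Proof.
move=> hX hP hM hQ hY a b [u [Xau [p [Hup [q [Mpq [v [Hqv Yvb]]]]]]]].
exists p; split.
  apply/rpow_pw; exists u; split; first exact: hX.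
  by apply/rpow_pw; apply: rpow_mono Hup.
exists q; split; first exact: hM.
apply/rpow_pw; apply: pw_snoc (hY _ _ Yvb).
by apply/rpow_pw; apply: rpow_mono Hqv.
Qed.

Lemma item4 sig (A : algebra sig) (F G : brel A -> brel A) (t : term sig 'I_3)
  (ht : malcev_mod F G t) :
  (forall (R S : brel A) (n : nat), adm R -> adm S ->
     rincl (rcompn n.+2 R S)
       (rcomp (F R)
       (rcomp (rpow (rclo (runion (F R) (F S))) n)
       (rcomp (rclo (runion R S))
       (rcomp (rpow (rclo (runion (G R) (G S))) n)
              (G (if odd n then R else S))))))).
Proof.
move=> R S n; elim: n R S => [|n IH] R S aR aS.
  move=> a c H; have [u [Fau [v [Muv Gvc]]]] := (item3 ht aR aS).1 a c H.
  exists u; split => //; exists u; split => //; exists v; split => //; by exists v.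
pose PP := rclo (runion (F R) (F S)).
pose MM := rclo (runion R S).
pose QQ := rclo (runion (G R) (G S)).
pose Tg := rcomp (rpow PP n.+1) (rcomp MM (rpow QQ n.+1)).
have cT : compatible Tg.
  apply: comp_compat; first by apply: rpow_compat; apply: rclo_compat.
  apply: comp_compat; first exact: rclo_compat.
  by apply: rpow_compat; apply: rclo_compat.
have HRS : rincl (rcompn n.+2 R S) Tg.
  move=> x y /(IH R S aR aS); apply: wrap => //.
  - by move=> u v H; apply: sub_rclo; left.
  - by move=> u v H; apply: sub_rclo; case: (odd n) H; [left|right].
have HSR : rincl (rcompn n.+2 S R) Tg.
  move=> x y /(IH S R aS aR); apply: wrap.
  - by move=> u v H; apply: sub_rclo; right.
  - by apply: rclo_mono => u v [H|H]; [right|left].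
  - by apply: rclo_mono => u v [H|H]; [right|left].
  - by apply: rclo_mono => u v [H|H]; [right|left].
  - by move=> u v H; apply: sub_rclo; case: (odd n) H; [right|left].
move=> a c [b [Rab /rcompn_snoc [d [Hbd Xdc]]]].
have aX : adm (if odd n then S else R) by case: (odd n).
have Tad : Tg a d by apply: HRS; exists b.
have Tbd : Tg b d by apply: HRS; exists b; split => //; case: aR.
have Tbc : Tg b c by apply: HSR; apply/rcompn_snoc; exists d.
have [u [Fau [v [[p [Hup [q [Mpq Hqv]]]] Gvc]]]] := key ht aR aX cT Rab Xdc Tad Tbd Tbc.
have -> : (if odd n.+1 then R else S) = (if odd n then S else R).
  by rewrite /=; case: (odd n).
exists u; split => //; exists p; split => //; exists q; split => //; by exists v.
Qed.

Lemma item7 sig (A : algebra sig) (F G : brel A -> brel A) (t : term sig 'I_3)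
  (ht : malcev_mod F G t)
  (hF : forall R : brel A, adm R -> adm (F R))
  (hG : forall R : brel A, adm R -> adm (G R)) :
  (forall (R : brel A) (n : nat), adm R ->
     rincl (rpow R n.+1) (rcomp (rpow (F R) n) (rcomp R (rpow (G R) n)))).
Proof.
move=> R n aR; case: (aR) => rR cR.
elim: n => [|n IH] a c.
  by move=> H; exists a; split => //; exists c.
pose Tg := rcomp (rpow (F R) n) (rcomp R (rpow (G R) n)).
have cT : compatible Tg.
  apply: comp_compat; first by apply: rpow_compat; case: (hF R aR).
  by apply: comp_compat => //; apply: rpow_compat; case: (hG R aR).
move=> /rpow_pw [b [Rab Hbc]].
have [d [Hbd Rdc]] := pw_unsnoc Hbc.
have Tad : Tg a d by apply: IH; apply/rpow_pw; exists b.
have Tbd : Tg b d by apply: IH; apply/rpow_pw; exists b; split.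
have Tbc : Tg b c by apply: IH; apply/rpow_pw.
have [u [Fau [v [[p [Hup [q [Rpq Hqv]]]] Gvc]]]] := key ht aR aR cT Rab Rdc Tad Tbd Tbc.
exists p; split.
  by apply/rpow_pw; exists u; split => //; apply/rpow_pw.
exists q; split => //; apply/rpow_pw; apply: pw_snoc Gvc; exact/rpow_pw.
Qed.



Fixpoint incl_list (T : Type) (l1 l2 : seq (brel T)) : Prop :=
  match l1, l2 with
  | [::], [::] => True
  | x :: l1', y :: l2' => rincl x y /\ incl_list l1' l2'
  | _, _ => False
  end.

Lemma incl_list_comp (T : Type) (l1 l2 : seq (brel T)) :
  incl_list l1 l2 -> rincl (rcomp_list l1) (rcomp_list l2).
Proof.
elim: l1 l2 => [|x l1 IH] [|y l2] //=; first by move=> _ a b.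
move=> [hxy h] a b [m [H1 H2]].
by exists m; split; [apply: hxy | apply: IH].
Qed.

Lemma incl_list_cat (T : Type) (a1 a2 b1 b2 : seq (brel T)) :
  incl_list a1 b1 -> incl_list a2 b2 -> incl_list (a1 ++ a2) (b1 ++ b2).
Proof.
elim: a1 b1 => [|x a1 IH] [|y b1] //=.
by move=> [h1 h2] h3; split => //; apply: IH.
Qed.

Lemma incl_list_map (T : Type) (f g : nat -> brel T) (s : seq nat) :
  (forall k, List.In k s -> rincl (f k) (g k)) ->
  incl_list [seq f k | k <- s] [seq g k | k <- s].
Proof.
elim: s => [|k s IH] //= H; split; first by apply: H; left.
by apply: IH => j hj; apply: H; right.
Qed.

Lemma rcomp_list_cat_iff (T : Type) (s1 s2 : seq (brel T)) a c :
  rcomp_list (s1 ++ s2) a c <-> exists b, rcomp_list s1 a b /\ rcomp_list s2 b c.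
Proof.
split; last by case=> b [H1 H2]; apply: rcomp_list_cat H1 H2.
elim: s1 a => [|R s1 IH] a /=; first by move=> H; exists a.
case=> m [Ram /IH [b [H1 H2]]]; exists b; split => //; by exists m.
Qed.

Lemma map_iota_shift (T : Type) (f : nat -> T) a k :
  [seq f i | i <- iota a.+1 k] = [seq f i.+1 | i <- iota a k].
Proof. by elim: k a => [|k IH] a //=; rewrite IH. Qed.

Lemma map_iota_last (T : Type) (f : nat -> T) a k :
  [seq f i | i <- iota a k.+1] = [seq f i | i <- iota a k] ++ [:: f (a + k)].
Proof. by rewrite -addn1 iotaD map_cat. Qed.

Lemma rbigU_mono (T : Type) (P Q : nat -> brel T) m n m' n' :
  (forall i, m <= i <= n -> exists j, m' <= j <= n' /\ rincl (P i) (Q j)) ->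
  rincl (rbigU P m n) (rbigU Q m' n').
Proof.
move=> H a b [i [hi Pi]]; have [j [hj PQ]] := H i hi; exists j; split => //.
exact: PQ.
Qed.

Lemma rclo_bigU_mono sig (A : algebra sig) (P Q : nat -> brel A) m n m' n' :
  (forall i, m <= i <= n -> exists j, m' <= j <= n' /\ rincl (P i) (Q j)) ->
  rincl (rclo (rbigU P m n)) (rclo (rbigU Q m' n')).
Proof. by move=> H; apply: rclo_mono; apply: rbigU_mono. Qed.

Lemma sub_rclo_bigU sig (A : algebra sig) (P : nat -> brel A) m n i :
  m <= i <= n -> rincl (P i) (rclo (rbigU P m n)).
Proof. by move=> hi a b H; apply: sub_rclo; exists i. Qed.

Lemma item12 sig (A : algebra sig) (F G : brel A -> brel A) (t : term sig 'I_3)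
  (ht : malcev_mod F G t) :
  (forall (Rf : nat -> brel A) (n : nat), 2 <= n ->
     (forall i, 1 <= i <= n -> adm (Rf i)) ->
     rincl (rcomp_list [seq Rf i | i <- iota 1 n])
       (rcomp_list
          ([:: F (Rf 1)]
           ++ [seq rclo (rbigU (fun i => F (Rf i)) 1 k) | k <- iota 2 (n - 2)]
           ++ [:: rclo (rbigU Rf 1 n)]
           ++ [seq rclo (rbigU (fun i => G (Rf i)) k n) | k <- iota 2 (n - 2)]
           ++ [:: G (Rf n)]))).
Proof.
move=> Rf n hn; have [m ->] : exists m, n = m.+2 by exists (n - 2); lia.
clear n hn.
elim: m Rf => [|m IH] Rf hR.
  move=> a c /= [b [R1ab [c' [R2bc <-]]]].
  have a1 : adm (Rf 1) by apply: hR.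
  have a2 : adm (Rf 2) by apply: hR.
  have [u [Fau [v [Muv Gvc]]]] := (item3 ht a1 a2).1 a c' (ex_intro _ b (conj R1ab R2bc)).
  exists u; split => //; exists v; split; last by exists c'.
  apply: (rclo_mono _ Muv) => x y [H|H]; [by exists 1 | by exists 2].
have E2 : m.+2 - 2 = m by lia.
have E3 : m.+3 - 2 = m.+1 by lia.
rewrite E2 in IH; rewrite E3.
set n := m.+2.
pose Rf' := fun i => Rf i.+1.
have hR' : forall i, 1 <= i <= n -> adm (Rf' i).
  by move=> i /andP [h1 h2]; apply: hR; apply/andP; rewrite /n in h2 *; lia.
have IH1 := IH Rf (fun i hi => hR i ltac:(move: hi => /andP [h1 h2]; apply/andP; rewrite /n in h2 *; lia)).
have IH2 := IH Rf' hR'.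
pose AL := [seq rclo (rbigU (fun i => F (Rf i)) 1 k) | k <- iota 2 m.+1].
pose BL := [seq rclo (rbigU (fun i => G (Rf i)) k n.+1) | k <- iota 2 m.+1].
pose MM := rclo (rbigU Rf 1 n.+1).
pose Tg := rcomp_list (AL ++ [:: MM] ++ BL).
have cT : compatible Tg.
  apply: rcomp_list_compat => X /In_cat [|/In_cat [[<-|[]]|]].
  - by move=> /In_map_iota [k [_ ->]]; apply: rclo_compat.
  - exact: rclo_compat.
  - by move=> /In_map_iota [k [_ ->]]; apply: rclo_compat.
have EAL : AL = rclo (rbigU (fun i => F (Rf i)) 1 2) ::
     [seq rclo (rbigU (fun i => F (Rf i)) 1 k.+1) | k <- iota 2 m].
  by rewrite /AL /= map_iota_shift.
have EBL : BL = [seq rclo (rbigU (fun i => G (Rf i)) k n.+1) | k <- iota 2 m] ++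
                [:: rclo (rbigU (fun i => G (Rf i)) n n.+1)].
  by rewrite /BL map_iota_last.
have H1 : rincl (rcomp_list [seq Rf i | i <- iota 1 n]) Tg.
  move=> x y /IH1 H; apply: (incl_list_comp _ H).
  rewrite /Tg EAL EBL /=; split.
    by apply: sub_rclo_bigU.
  apply: incl_list_cat.
    apply: incl_list_map => k /In_iota hk; apply: rclo_bigU_mono => i hi.
    by exists i; split => //; lia.
  split.
    by apply: rclo_bigU_mono => i hi; exists i; split => //; lia.
  apply: incl_list_cat.
    apply: incl_list_map => k /In_iota hk; apply: rclo_bigU_mono => i hi.
    by exists i; split => //; lia.
  split => //; apply: (sub_rclo_bigU (P := fun i => G (Rf i)) (i := n)).
  by apply/andP; lia.
have H2 : rincl (rcomp_list [seq Rf' i | i <- iota 1 n]) Tg.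
  move=> x y /IH2 H; apply: (incl_list_comp _ H).
  rewrite /Tg EAL EBL /=; split.
    by apply: (sub_rclo_bigU (P := fun i => F (Rf i)) (i := 2)).
  apply: incl_list_cat.
    apply: incl_list_map => k /In_iota hk; apply: rclo_bigU_mono => i hi.
    by exists i.+1; split => //; lia.
  split.
    by apply: rclo_bigU_mono => i hi; exists i.+1; split => //; lia.
  apply: incl_list_cat.
    apply: incl_list_map => k /In_iota hk; apply: rclo_bigU_mono => i hi.
    by exists i.+1; split => //; lia.
  split => //; apply: (sub_rclo_bigU (P := fun i => G (Rf i)) (i := n.+1)).
  by apply/andP; lia.
have Es : [seq Rf i | i <- iota 1 n.+1] =
    Rf 1 :: ([seq Rf i | i <- iota 2 m.+1] ++ [:: Rf n.+1]).
  by rewrite map_iota_last.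
have Es1 : [seq Rf i | i <- iota 1 n] = Rf 1 :: [seq Rf i | i <- iota 2 m.+1].
  by [].
have Es2 : [seq Rf' i | i <- iota 1 n] = [seq Rf i | i <- iota 2 m.+1] ++ [:: Rf n.+1].
  by rewrite (map_iota_shift Rf 1 m.+1) [LHS]map_iota_last.
move=> a c; rewrite Es => -[x1 [R1a Hrest]].
have Hrest' : rcomp_list ([seq Rf i | i <- iota 2 m.+1] ++ [:: Rf n.+1]) x1 c := Hrest.
have [x' [Hth [c' [Rnc Ec]]]] := (rcomp_list_cat_iff _ _ _ _).1 Hrest'; subst c'.
have a1 : adm (Rf 1) by apply: hR; apply/andP; lia.
have an : adm (Rf n.+1) by apply: hR; apply/andP; rewrite /n; lia.
have Tad : Tg a x' by apply: H1; rewrite Es1; exists x1.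
have Tbd : Tg x1 x' by apply: H1; rewrite Es1; exists x1; split => //; case: a1.
have Tbc : Tg x1 c.
  apply: H2; rewrite Es2; apply/rcomp_list_cat_iff; exists x'; split => //.
  by exists c.
have [u [Fau [v [Tuv Gvc]]]] := key ht a1 an cT R1a Rnc Tad Tbd Tbc.
exists u; split => //.
have -> : AL ++ [:: MM] ++ BL ++ [:: G (Rf n.+1)] =
  (AL ++ [:: MM] ++ BL) ++ [:: G (Rf n.+1)] by rewrite !catA.
apply: (rcomp_list_cat Tuv); exists c; split => //.
Qed.


Unset Implicit Arguments.
Set Strict Implicit.

Theorem theorem1 (sig : signature) (A : algebra sig)
    (F G : brel A -> brel A)
    (hF : forall R : brel A, adm R -> adm (F R))
    (hG : forall R : brel A, adm R -> adm (G R))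
    (t : term sig 'I_3) (ht : malcev_mod F G t) :
  (* (i) *)
  (forall (R S th th1 th2 : brel A) (a b c d : A),
     adm R -> adm S ->
     R a b -> th1 b c -> th2 a d -> S d c -> th b d ->
     rcomp (F R) (rcomp (rclo (runion th2 (runion th th1))) (G S)) a c) /\
  (* (ii) *)
  (forall (R S th : brel A), adm R -> adm S ->
     rincl (rcomp R (rcomp th S))
            (rcomp (F R) (rcomp (rclo (runion (rcomp R th) (rcomp th S))) (G S)))) /\
  (* (iii) *)
  (forall (R S : brel A), adm R -> adm S ->
     rincl (rcomp R S) (rcomp (F R) (rcomp (rclo (runion R S)) (G S))) /\
     rincl (rcomp (F R) (rcomp (rclo (runion R S)) (G S)))
            (rcomp (F R) (rcomp S (rcomp R (G S))))) /\
  (* (iv) *)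
  (forall (R S : brel A) (n : nat), adm R -> adm S ->
     rincl (rcompn n.+2 R S)
       (rcomp (F R)
       (rcomp (rpow (rclo (runion (F R) (F S))) n)
       (rcomp (rclo (runion R S))
       (rcomp (rpow (rclo (runion (G R) (G S))) n)
              (G (if odd n then R else S))))))) /\
  (* (v) *)
  (forall (R S : brel A), adm R -> adm S ->
     rincl (rplus R S)
            (rcomp (rplus (F R) (F S)) (rcomp (rclo (runion R S)) (rplus (G R) (G S)))) /\
     rincl (rcomp (rplus (F R) (F S)) (rcomp (rclo (runion R S)) (rplus (G R) (G S))))
            (rcomp (rplus (F R) (F S)) (rcomp R (rcomp S (rplus (G R) (G S)))))) /\
  (* (vi) *)
  (forall R : brel A, adm R ->
     rincl (rcomp R R) (rcomp (F R) (rcomp R (G R)))) /\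
  (* (vii) *)
  (forall (R : brel A) (n : nat), adm R ->
     rincl (rpow R n.+1) (rcomp (rpow (F R) n) (rcomp R (rpow (G R) n)))) /\
  (* (viii) *)
  (forall R : brel A, adm R ->
     rincl (clos_trans A R)
            (rcomp (clos_trans A (F R)) (rcomp R (clos_trans A (G R))))) /\
  (* (ix) *)
  (forall R : brel A, adm R ->
     rincl (rconv R) (rcomp (F (rconv R)) (rcomp R (G (rconv R)))) /\
     rincl R (rcomp (F R) (rcomp (rconv R) (G R)))) /\
  (* (x) *)
  (forall (R S : brel A), adm R -> adm S ->
     rincl (rplus R (rconv S))
            (rcomp (rplus (F R) (F (rconv S)))
                   (rcomp (rclo (runion R S)) (rplus (G R) (G (rconv S))))) /\
     rincl (rcomp (rplus (F R) (F (rconv S)))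
                   (rcomp (rclo (runion R S)) (rplus (G R) (G (rconv S)))))
            (rcomp (rplus (F R) (F (rconv S)))
                   (rcomp R (rcomp S (rplus (G R) (G (rconv S))))))) /\
  (* (xi) *)
  (forall R : brel A, adm R ->
     rincl (Cg R)
            (rcomp (rplus (F R) (F (rconv R)))
                   (rcomp R (rplus (G R) (G (rconv R)))))) /\
  (* (xii) : family R_1, ..., R_n given by Rf 1, ..., Rf n *)
  (forall (Rf : nat -> brel A) (n : nat), 2 <= n ->
     (forall i, 1 <= i <= n -> adm (Rf i)) ->
     rincl (rcomp_list [seq Rf i | i <- iota 1 n])
       (rcomp_list
          ([:: F (Rf 1)]
           ++ [seq rclo (rbigU (fun i => F (Rf i)) 1 k) | k <- iota 2 (n - 2)]
           ++ [:: rclo (rbigU Rf 1 n)]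
           ++ [seq rclo (rbigU (fun i => G (Rf i)) k n) | k <- iota 2 (n - 2)]
           ++ [:: G (Rf n)]))) /\
  (* (xiii) *)
  (forall (Rf : nat -> brel A) (n : nat), 1 <= n ->
     (forall i, 1 <= i <= n -> adm (Rf i)) ->
     rincl (rsum [seq Rf i | i <- iota 1 n])
       (rcomp (rsum [seq F (Rf i) | i <- iota 1 n])
              (rcomp (rclo (rbigU Rf 1 n))
                     (rsum [seq G (Rf i) | i <- iota 1 n])))) /\
  (* (xiv) *)
  (forall (Rf : nat -> brel A) (n : nat), 1 <= n ->
     (forall i, 1 <= i <= n -> adm (Rf i)) ->
     rincl (Cg (rbigU Rf 1 n))
       (rcomp (rsum (flatten [seq [:: F (Rf i); F (rconv (Rf i))] | i <- iota 1 n]))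
              (rcomp (rclo (rbigU Rf 1 n))
                     (rsum (flatten [seq [:: G (Rf i); G (rconv (Rf i))] | i <- iota 1 n]))))).
Proof.
split; first exact: (item1 ht).
split; first exact: (item2 ht).
split; first exact: (item3 ht).
split; first exact: (item4 ht).
split; first exact: (item5 ht hF hG).
split; first exact: (item6 ht).
split; first exact: (item7 ht hF hG).
split; first exact: (item8 ht hF hG).
split; first exact: (item9 ht).
split; first exact: (item10 ht hF hG).
split; first exact: (item11 ht hF hG).
split; first exact: (item12 ht).
split; first exact: (item13 ht hF hG).
exact: (item14 ht hF hG).
Qed.
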